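(* Consider the Single TFM with split parameter $z\in(0,1)$, all transactions of common size $s>0$, history $H$ with burning fee $r$, and a set $M_0$ of user transactions with $|M_0|=w>c_{block}$. Suppose all includers and the block producer follow the indicated allocation rules and add no fake transactions, producing block $B_k$. Then for every $t\in M_0\setminus B_k$ there is a bid $c'_t$ for $t$ such that, with all other transactions and bids unchanged and all parties following the indicated allocation rules without fake transactions, $t$ is included in at least one inclusion list and in the block.
   Context: Model: in one slot there are users, $m$ includers with distinct orders $1,\dots,m$ (order $1$ best), and one block producer. Each transaction has size $s$. Includers choose inclusion lists (at most $c_{Incl}$ transactions each); the block producer, seeing them, builds a block (at most $c_{block}$ transactions). Each transaction in the block pays burning fee $rs$. Block producer cost $\mu^{Cost}_{BP}\ge0$ and includer cost $\mu^{Cost}_{CM}\ge0$ per unit of size per included user transaction. Single TFM: the bid is a single nonnegative number $c_t$. Block producer fee $=\max\{\min\{\mu^{Cost}_{BP}s,\ c_ts-rs\}+\max\{c_ts-rs-\mu^{Cost}_{BP}s,0\}(1-z),\ 0\}$, paid when $t$ is in the block. Committee fee $=\max\{c_ts-rs-\mu^{Cost}_{BP}s,0\}\cdot z$, paid to the smallest-order includer listing $t$, only if $t$ is in the block. Indicated allocation rules. Block producer: among transactions with $c_t\ge r+\mu^{Cost}_{BP}$, include those with highest block producer fee (deterministic tie-breaking) until full. Includer of order $j$: compute the set $S$ the block producer would include; discard those with committee fee below $\mu^{Cost}_{CM}s$; sort the rest by committee fee decreasingly (deterministic tie-breaking); includer $j$ takes positions $(j-1)c_{Incl}+1,\dots,jc_{Incl}$.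 *)

(* Defs.v *)
From HB Require Import structures.
From mathcomp Require Import all_boot all_order all_algebra.
Set Implicit Arguments. Unset Strict Implicit. Unset Printing Implicit Defensive.
Import Order.TTheory GRing.Theory Num.Theory.
Local Open Scope ring_scope.

Section SingleTFM.
Variable R : realFieldType.

Definition feeBP (s r muBP z c : R) : R :=
  Num.max (Num.min (muBP * s) (c * s - r * s)
           + Num.max (c * s - r * s - muBP * s) 0 * (1 - z)) 0.

Definition feeCM (s r muBP z c : R) : R :=
  Num.max (c * s - r * s - muBP * s) 0 * z.

Variable T : finType.

Definition before (f : T -> R) (tb : T -> nat) : rel T :=
  fun x y => (f y < f x) || ((f x == f y) && (tb x <= tb y)%N).

Definition bp_list (s r muBP z : R) (cblock : nat) (tbBP : T -> nat)
  (M0 : {set T}) (c : T -> R) : seq T :=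
  take cblock
    (sort (before (fun u => feeBP s r muBP z (c u)) tbBP)
          [seq u <- enum M0 | r + muBP <= c u]).

Definition block (s r muBP z : R) (cblock : nat) (tbBP : T -> nat)
  (M0 : {set T}) (c : T -> R) : {set T} :=
  [set u in bp_list s r muBP z cblock tbBP M0 c].

(* Indicated includer rule; includer j : 'I_m has order j+1 and takes
   positions j*cIncl+1, ..., (j+1)*cIncl of the sorted list. *)
Definition incl_list (s r muBP muCM z : R) (cblock cIncl : nat)
  (tbBP tbCM : T -> nat) (M0 : {set T}) (c : T -> R) (j : nat) : seq T :=
  take cIncl (drop (j * cIncl)
    (sort (before (fun u => feeCM s r muBP z (c u)) tbCM)
      [seq u <- bp_list s r muBP z cblock tbBP M0 c
         | muCM * s <= feeCM s r muBP z (c u)])).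

Definition upd_bid (c : T -> R) (t : T) (b : R) : T -> R :=
  fun u => if u == t then b else c u.

End SingleTFM.

(* Main.v *)
Require Import Defs.
From HB Require Import structures.
From mathcomp Require Import all_boot all_order all_algebra.
From mathcomp Require Import ring lra.
Import Order.TTheory GRing.Theory Num.Theory.
Local Open Scope ring_scope.

Lemma feeBP_lt (R : realFieldType) (s r muBP z c1 c2 : R) :
  0 < z < 1 -> 0 < s -> 0 <= muBP -> c1 < c2 -> r + muBP < c2 ->
  feeBP s r muBP z c1 < feeBP s r muBP z c2.
Proof.
move=> /andP[z0 z1] s0 m0 c12 rc.
have h1 : c1 * s < c2 * s by rewrite ltr_pM2r.
have h2 : 0 < (c2 - r - muBP) * s by apply: mulr_gt0; lra.
have h3 : 0 <= muBP * s by apply: mulr_ge0; lra.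
have hx : c1 * s - r * s < c2 * s - r * s by lra.
have ha : muBP * s < c2 * s - r * s by lra.
rewrite /feeBP; move: hx ha h3.
move: (c1 * s - r * s) (c2 * s - r * s) (muBP * s) => x1 x2 a hx ha h3.
have e2 : 0 < (x2 - a) * (1 - z) by apply: mulr_gt0; lra.
have hk : (x1 - a) * (1 - z) < (x2 - a) * (1 - z) by rewrite ltr_pM2r; lra.
rewrite (maxElt (x1 - a)) (maxElt (x2 - a)) !minElt.
rewrite gt_max; apply/andP; split; rewrite lt_max; apply/orP; left;
case: (ltrP a x1) => h4; case: (ltrP (x1-a) 0) => h5;
case: (ltrP a x2) => h6; case: (ltrP (x2-a) 0) => h7; rewrite ?mul0r ?addr0;
move: e2 hk; move: ((x1 - a) * (1 - z)) ((x2 - a) * (1 - z)) => q p e2 hk; lra.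
Qed.

Lemma feeCM_lt (R : realFieldType) (s r muBP z c1 c2 : R) :
  0 < z < 1 -> 0 < s -> c1 < c2 -> r + muBP < c2 ->
  feeCM s r muBP z c1 < feeCM s r muBP z c2.
Proof.
move=> /andP[z0 z1] s0 c12 rc.
have h1 : c1 * s < c2 * s by rewrite ltr_pM2r.
have h2 : 0 < (c2 - r - muBP) * s by apply: mulr_gt0; lra.
rewrite /feeCM (max_l (x := c2 * s - r * s - muBP * s)); last lra.
rewrite ltr_pM2r // gt_max; apply/andP; split; lra.
Qed.

Lemma before_total (R : realFieldType) (T : finType) (f : T -> R) tb :
  total (before f tb).
Proof.
move=> x y; rewrite /before.
case: (ltrgtP (f x) (f y)) => h; rewrite ?orbT ?orTb //.
rewrite ?h ?eqxx /=; case: (leqP (tb x) (tb y)) => h2; rewrite ?orbT //.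
by rewrite (ltnW h2) orbT.
Qed.

Lemma before_trans (R : realFieldType) (T : finType) (f : T -> R) tb :
  transitive (before f tb).
Proof.
move=> y x z; rewrite /before => /orP[h1|/andP[/eqP h1 h1']] /orP[h2|/andP[/eqP h2 h2']].
- by rewrite (lt_trans h2 h1).
- by rewrite -h2 h1.
- by rewrite h1 h2.
- by rewrite h1 h2 eqxx (leq_trans h1' h2') orbT.
Qed.

Lemma head_sort (R : realFieldType) (T : finType) (f : T -> R) tb (s : seq T) t k :
  t \in s -> (forall u, u \in s -> u != t -> f u < f t) -> (0 < k)%N ->
  t \in take k (sort (before f tb) s).
Proof.
move=> ts hmax k0.
have hs := sort_sorted (@before_total R T f tb) s.
have hm : forall x, (x \in sort (before f tb) s) = (x \in s) by move=> x; rewrite mem_sort.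
move: hs hm; case: (sort _ s) => [|h rest] hs hm.
  by move: (hm t); rewrite ts in_nil.
case: k k0 => // k _ /=.
rewrite in_cons; case: eqP => [//|hne] /=.
have tr : t \in rest.
  by move: (hm t); rewrite ts in_cons; case: eqP => // ->.
have := order_path_min (@before_trans R T f tb) hs.
move=> /allP /(_ t tr); rewrite /before.
have hh : h \in s by rewrite -hm mem_head.
have := hmax h hh (introN eqP (fun e => hne (esym e))).
move=> lt; rewrite ltNge (ltW lt) /= (lt_eqF lt) //.
Qed.

Theorem mainTheorem4 (R : realFieldType) (T : finType)
  (s r muBP muCM z : R) (m cIncl cblock : nat)
  (tbBP tbCM : T -> nat) (M0 : {set T}) (c : T -> R) :
  0 < z < 1 -> 0 < s -> 0 <= muBP -> 0 <= muCM ->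
  (0 < m)%N -> (0 < cIncl)%N -> (0 < cblock)%N ->
  injective tbBP -> injective tbCM ->
  (forall u, u \in M0 -> 0 <= c u) ->
  (cblock < #|M0|)%N ->
  forall t, t \in M0 :\: block s r muBP z cblock tbBP M0 c ->
  exists c't : R, 0 <= c't /\
    let c' := upd_bid c t c't in
    (exists j : 'I_m,
       t \in incl_list s r muBP muCM z cblock cIncl tbBP tbCM M0 c' j) /\
    t \in block s r muBP z cblock tbBP M0 c'.
Proof.
move=> hz s0 mb0 mc0 m0 ci0 cb0 _ _ _ _ t.
rewrite inE => /andP[_ tM].
have /andP[z0 z1] := hz.
set S := \sum_u `|c u|.
have S0 : 0 <= S by apply: sumr_ge0 => u _; exact: normr_ge0.
have q0 : 0 <= muCM / z by apply: divr_ge0; lra.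
have ra : r <= `|r| by exact: ler_norm.
exists (1 + `|r| + muBP + muCM / z + S).
split; first by have := normr_ge0 r; lra.
move=> c'.
set b := 1 + `|r| + muBP + muCM / z + S.
have hcu : forall u, c u < b.
  move=> u; have : `|c u| <= S.
    by rewrite /S (bigD1 u) //= lerDl; apply: sumr_ge0 => v _; exact: normr_ge0.
  have := ler_norm (c u); rewrite /b.
  move=> h1 h2; apply: (le_lt_trans (le_trans h1 h2)); have := normr_ge0 r; lra.
have hrb : r + muBP < b by rewrite /b; lra.
have c't : c' t = b by rewrite /c' /upd_bid eqxx.
have c'u : forall u, u != t -> c' u = c u by move=> u /negbTE hu; rewrite /c' /upd_bid hu.
have hBP : forall u, u != t -> feeBP s r muBP z (c' u) < feeBP s r muBP z (c' t).
  by move=> u hu; rewrite c't c'u //; apply: feeBP_lt.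
have hCM : forall u, u != t -> feeCM s r muBP z (c' u) < feeCM s r muBP z (c' t).
  by move=> u hu; rewrite c't c'u //; apply: feeCM_lt.
have inbp : t \in bp_list s r muBP z cblock tbBP M0 c'.
  apply: head_sort => //.
    by rewrite mem_filter mem_enum tM c't andbT; lra.
  by move=> u _; apply: hBP.
have feeok : muCM * s <= feeCM s r muBP z (c' t).
  rewrite c't /feeCM.
  have -> : b * s - r * s - muBP * s = (b - r - muBP) * s by ring.
  have hd : muCM / z <= b - r - muBP by rewrite /b; lra.
  rewrite max_l; last by apply: mulr_ge0; lra.
  have -> : muCM * s = (muCM / z) * s * z by rewrite mulrAC divfK //; apply: lt0r_neq0.
  by rewrite ler_pM2r // ler_pM2r.
split.
  exists (Ordinal m0); rewrite /incl_list /= mul0n drop0.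
  apply: head_sort => //.
    by rewrite mem_filter feeok inbp.
  by move=> u _; apply: hCM.
by rewrite /block inE.
Qed.
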